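(* Let $k$ be an integer and let $\mathbf{x}\in\mathcal{A}_k$, where $\mathbf{x}$ is a vertex of $P^n_{\mathrm{SEP}}$ (so $\mathbf{x}$ has $n$ nodes). Then $k+3\le n\le 2k$.
   Context: $K_n=(V_n,E_n)$ is the complete undirected graph on $n$ nodes; $\delta(S)$ is the set of edges with exactly one endpoint in $S\subseteq V_n$. $P^n_{\mathrm{SEP}}=\{\mathbf{x}\in\mathbb{R}^{E_n} : \sum_{e\in\delta(v)}x_e=2\ \forall v;\ \sum_{e\in\delta(S)}x_e\ge 2\ \forall S \text{ with } 3\le|S|\le n-3;\ 0\le x_e\le 1\}$. A vertex is an extreme point of $P^n_{\mathrm{SEP}}$; it is fractional if it is not integral. The support graph of $\mathbf{x}$ is $G_{\mathbf{x}}=(V_n,E_{\mathbf{x}})$ with $E_{\mathbf{x}}=\{e: x_e>0\}$. $\mathcal{F}_k$ is the set of all fractional vertices $\mathbf{x}$ of $P^n_{\mathrm{SEP}}$, over all $n$, with $|E_{\mathbf{x}}|=n+k$; $\mathcal{A}_k$ is the set of $\mathbf{x}\in\mathcal{F}_k$ whose support graph $G_{\mathbf{x}}$ has no node of degree $2$. *)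

(* Defs.v *)
From HB Require Import structures.
From mathcomp Require Import all_boot all_order all_algebra.
From mathcomp Require Import reals.
Set Implicit Arguments. Unset Strict Implicit. Unset Printing Implicit Defensive.
Import Order.TTheory GRing.Theory Num.Theory.
Local Open Scope ring_scope.

(* Edges of the complete graph K_n on node set 'I_n: 2-element subsets. *)
Definition edge (n : nat) := {e : {set 'I_n} | #|e| == 2%N}.

Definition in_cut n (S : {set 'I_n}) (e : edge n) : bool :=
  #|val e :&: S| == 1%N.

Definition in_SEP (R : realType) (n : nat) (x : edge n -> R) : Prop :=
  [/\ (forall v : 'I_n, \sum_(e : edge n | in_cut [set v] e) x e = 2),
      (forall S : {set 'I_n}, (3 <= #|S|)%N -> (#|S| <= n - 3)%N ->
          2 <= \sum_(e : edge n | in_cut S e) x e)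
    & (forall e : edge n, 0 <= x e <= 1)].

Definition SEP_vertex (R : realType) (n : nat) (x : edge n -> R) : Prop :=
  in_SEP x /\
  forall (y z : edge n -> R) (l : R),
    in_SEP y -> in_SEP z -> 0 < l -> l < 1 ->
    (forall e, x e = l * y e + (1 - l) * z e) -> y = z.

Definition fractional (R : realType) (n : nat) (x : edge n -> R) : Prop :=
  ~ (forall e : edge n, x e \is a Num.int).

Definition support (R : realType) (n : nat) (x : edge n -> R) : {set edge n} :=
  [set e | 0 < x e].

Definition supp_deg (R : realType) (n : nat) (x : edge n -> R) (v : 'I_n) : nat :=
  #|[set e in support x | v \in val e]|.

Definition in_F (R : realType) (k : int) (n : nat) (x : edge n -> R) : Prop :=
  [/\ SEP_vertex x, fractional x & (#|support x|%:Z = n%:Z + k)%R].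

Definition in_A (R : realType) (k : int) (n : nat) (x : edge n -> R) : Prop :=
  in_F k x /\ forall v : 'I_n, supp_deg x v != 2%N.

(* Main.v *)
Require Import Defs.
From mathcomp Require Import all_boot all_order all_algebra.
From mathcomp Require Import reals.
From mathcomp Require Import ring lra zify.
Import Order.TTheory GRing.Theory Num.Theory.
Local Open Scope ring_scope.
Set Implicit Arguments. Unset Strict Implicit. Unset Printing Implicit Defensive.

Lemma edgeP n (e : edge n) : exists u v, u != v /\ val e = [set u; v].
Proof. by apply/cards2P; exact: (valP e). Qed.

Lemma card1I (T : finType) (u : T) (A : {set T}) : #|[set u] :&: A| = (u \in A).
Proof.
case: (boolP (u \in A)) => H.
  by rewrite (setIidPl _) ?sub1set // cards1.
have -> : [set u] :&: A = set0.
  apply/setP=> w; rewrite !inE; apply/negbTE; apply/negP => /andP[/eqP -> ].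
  by rewrite (negbTE H).
by rewrite cards0.
Qed.

Lemma card2I (T : finType) (u v : T) (A : {set T}) :
  u != v -> #|[set u; v] :&: A| = ((u \in A) + (v \in A))%N.
Proof.
move=> uv; rewrite setIUl cardsU !card1I.
have -> : [set u] :&: A :&: ([set v] :&: A) = set0.
  apply/setP=> w; rewrite !inE; apply/negbTE; apply/negP.
  move=> /andP[/andP[/eqP -> _] /andP[/eqP uv' _]].
  by rewrite uv' eqxx in uv.
by rewrite cards0 subn0.
Qed.

Lemma addb1 (a b : bool) : ((a + b)%N == 1%N) = a (+) b.
Proof. by case: a; case: b. Qed.

Lemma in_cutE n (S : {set 'I_n}) (e : edge n) u v :
  u != v -> val e = [set u; v] -> in_cut S e = (u \in S) (+) (v \in S).
Proof. by move=> uv ev; rewrite /in_cut ev card2I // addb1. Qed.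

Definition cutf (R : realType) n (f : edge n -> R) (S : {set 'I_n}) :=
  \sum_(e | in_cut S e) f e.

Definition betw n (S T : {set 'I_n}) (e : edge n) :=
  (#|val e :&: (S :\: T)| == 1%N) && (#|val e :&: (T :\: S)| == 1%N).

Lemma modular (R : realType) n (f : edge n -> R) S T :
  cutf f S + cutf f T = cutf f (S :&: T) + cutf f (S :|: T) +
     2 * \sum_(e | betw S T e) f e.
Proof.
rewrite /cutf mulr_sumr !(big_mkcond (fun e => in_cut _ e)) (big_mkcond (betw S T)).
rewrite -!big_split /=; apply: eq_bigr => e _.
have [u [v [uv ev]]] := edgeP e.
rewrite /betw !(in_cutE _ uv ev) ev !card2I // !addb1 !inE.
by case: (u \in S); case: (u \in T); case: (v \in S); case: (v \in T);
  rewrite /=; ring.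
Qed.

Lemma cutfC (R : realType) n (f : edge n -> R) S : cutf f (~: S) = cutf f S.
Proof.
apply: eq_bigl => e; have [u [v [uv ev]]] := edgeP e.
by rewrite !(in_cutE _ uv ev) !inE addbN addNb negbK.
Qed.

Lemma in_cut1 n (v : 'I_n) (e : edge n) : in_cut [set v] e = (v \in val e).
Proof.
have [a [b [ab ev]]] := edgeP e.
rewrite (in_cutE _ ab ev) ev !inE.
rewrite (eq_sym v a) (eq_sym v b).
case: (eqVneq a v) => [e1|]; case: (eqVneq b v) => [e2|] //=.
by rewrite e1 e2 eqxx in ab.
Qed.

Lemma nb1 (b : bool) : (nat_of_bool b == 1%N) = b.
Proof. by case: b. Qed.

Lemma pair_cut (R : realType) n (a b : 'I_n) : a != b ->
  exists e0 : edge n, val e0 = [set a; b] /\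
   forall f : edge n -> R, cutf f [set a] + cutf f [set b] = cutf f [set a; b] + 2 * f e0.
Proof.
move=> ab.
have h2 : #|[set a; b]| == 2%N by rewrite cards2 ab.
pose e0 : edge n := exist (fun e : {set 'I_n} => #|e| == 2%N) [set a; b] h2.
exists e0; split => // f.
rewrite modular.
have -> : [set a] :&: [set b] = set0.
  apply/setP => w; rewrite !inE; apply/negbTE/negP => /andP[/eqP -> /eqP ab'].
  by rewrite ab' eqxx in ab.
have -> : cutf f set0 = 0.
  by rewrite /cutf big_pred0 // => e; rewrite /in_cut setI0 cards0.
rewrite add0r (big_pred1 e0) //.
have dab : [set a] :\: [set b] = [set a].
  apply/setP => w; rewrite !inE; case: (eqVneq w a) => [->|]; rewrite ?andbF //.
  by rewrite ab.
have dba : [set b] :\: [set a] = [set b].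
  apply/setP => w; rewrite !inE; case: (eqVneq w b) => [->|]; rewrite ?andbF //.
  by rewrite eq_sym ab.
move=> e; rewrite /betw dab dba ![val e :&: _]setIC !card1I !nb1.
apply/idP/eqP.
  move=> /andP[ae be]; apply/val_inj => /=.
  apply/eqP; rewrite eq_sym eqEcard (eqP h2) (eqP (valP e)) leqnn andbT.
  by rewrite subUset !sub1set ae be.
by move=> ->; rewrite /= !inE !eqxx orbT.
Qed.


Definition lam (T : finType) (A B : {set T}) :=
  [|| A \subset B, B \subset A | [disjoint A & B]].

Lemma lamC (T : finType) (A B : {set T}) : lam A B = lam B A.
Proof. by rewrite /lam disjoint_sym orbCA orbA. Qed.

Lemma lam_inter (T : finType) (W U S : {set T}) :
  lam W U -> ~~ lam U S -> lam W S -> lam W (S :&: U).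
Proof.
case/or3P => [WU|UW|dWU] nUS; case/or3P => [WS|SW|dWS].
- by rewrite /lam subsetI WS WU.
- by move: nUS; rewrite /lam (subset_trans SW WU) orbT.
- by rewrite /lam (disjointWr (subsetIl S U) dWS) !orbT.
- by rewrite /lam subIset ?UW ?orbT.
- by rewrite /lam subIset ?UW ?orbT.
- by rewrite /lam subIset ?UW ?orbT.
- by rewrite /lam (disjointWr (subsetIr S U) dWU) !orbT.
- by rewrite /lam (disjointWr (subsetIr S U) dWU) !orbT.
- by rewrite /lam (disjointWr (subsetIr S U) dWU) !orbT.
Qed.

Lemma lam_union (T : finType) (W U S : {set T}) :
  lam W U -> ~~ lam U S -> lam W S -> lam W (S :|: U).
Proof.
case/or3P => [WU|UW|dWU] nUS; case/or3P => [WS|SW|dWS].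
- by rewrite /lam (subset_trans WU (subsetUr S U)).
- by rewrite /lam (subset_trans WU (subsetUr S U)).
- by rewrite /lam (subset_trans WU (subsetUr S U)).
- by rewrite /lam (subset_trans WS (subsetUl S U)).
- by rewrite /lam subUset SW UW orbT.
- by move: nUS; rewrite /lam (disjointWl UW dWS) !orbT.
- by rewrite /lam (subset_trans WS (subsetUl S U)).
- by move: nUS; rewrite /lam disjoint_sym (disjointWl SW dWU) !orbT.
- by rewrite /lam -setI_eq0 setIUr setU_eq0 !setI_eq0 dWS dWU !orbT.
Qed.

Lemma lam_count (T : finType) m : forall (U : {set T}) (L : {set {set T}}),
  #|U| = m -> (forall S, S \in L -> S \subset U /\ (1 < #|S|)%N) ->
  {in L &, forall A B, lam A B} -> (#|L| <= m.-1)%N.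
Proof.
elim: m => [|m IH] U L hU hL hlam.
  case: (set_0Vmem L) => [->|[S SL]]; first by rewrite cards0.
  have [sSU c2] := hL S SL.
  by have := subset_leq_card sSU; rewrite hU; lia.
case: (set_0Vmem L) => [->|[M0 M0L]]; first by rewrite cards0.
case: (arg_minnP (fun S : {set T} => #|S|) M0L) => M ML Mmin.
have {}ML : M \in L := ML.
have [MU M2] := hL M ML.
have [a aM] : exists a, a \in M.
  by apply/set0Pn; rewrite -card_gt0; lia.
have Hsup : forall S, S \in L -> a \in S -> S != M -> M \proper S.
  move=> S SL aS SM.
  case/or3P: (hlam S M SL ML) => [SsM|MsS|dSM].
  - have := Mmin S SL => cle.
    by move: SM; rewrite eqEcard SsM cle.
  - by rewrite properEneq MsS eq_sym SM.
  - by rewrite (disjointFr dSM aS) in aM.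
have aU : a \in U by apply: (subsetP MU).
have hU2 : #|U :\ a| = m by move: hU; rewrite (cardsD1 a U) aU; case.
have Hinj : {in L :\ M &, injective (fun S => S :\ a)}.
  have key : forall S S', S \in L :\ M -> S' \in L :\ M -> a \in S -> a \notin S' ->
      S :\ a = S' :\ a -> False.
    move=> S S'; rewrite !inE => /andP[SM SL] /andP[S'M S'L] aS aS' E.
    have MS := Hsup S SL aS SM.
    have [b bM ba] : exists2 b, b \in M & b != a.
      have : (0 < #|M :\ a|)%N by move: M2; rewrite (cardsD1 a M) aM; lia.
      by rewrite card_gt0 => /set0Pn [b]; rewrite !inE => /andP[ba bM]; exists b.
    have bS' : b \in S'.
      have : b \in S :\ a by rewrite !inE ba (subsetP (proper_sub MS)).
      by rewrite E !inE => /andP[].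
    case/or3P: (hlam S' M S'L ML) => [S'sM|MsS'|dS'M].
    - have := Mmin S' S'L => cle.
      by move: S'M; rewrite eqEcard S'sM cle.
    - by move: aS'; rewrite (subsetP MsS' a aM).
    - by rewrite (disjointFr dS'M bS') in bM.
  move=> S S' SL S'L /= E.
  case: (boolP (a \in S)) => aS; case: (boolP (a \in S')) => aS'.
  - by rewrite -(setD1K aS) -(setD1K aS') E.
  - by case: (key S S' SL S'L aS aS' E).
  - by case: (key S' S S'L SL aS' aS (esym E)).
  - apply/setP => w; move/setP: E => /(_ w); rewrite !inE.
    by case: (eqVneq w a) => [->|]; rewrite ?(negbTE aS) ?(negbTE aS').
have := IH (U :\ a) [set S :\ a | S in L :\ M] hU2.
rewrite card_in_imset // (cardsD1 M L) ML.
move=> H; suff : (#|L :\ M| <= m.-1)%N.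
  have := leq_trans M2 (subset_leq_card MU); rewrite hU /=.
  by case: (m) => [|m'] //= _; rewrite add1n ltnS.
apply: H.
- move=> S2 /imsetP [S]; rewrite !inE => /andP[SM SL] ->.
  have [SU cS2] := hL S SL; split; first exact: setSD.
  have := cardsD1 a S; case: (boolP (a \in S)) => aS /= E.
    have := proper_card (Hsup S SL aS SM); lia.
  lia.
- move=> A B /imsetP [S]; rewrite !inE => /andP[_ SL] -> /imsetP [S']; rewrite !inE => /andP[_ S'L] ->.
  case/or3P: (hlam S S' SL S'L) => [H|H|H]; rewrite /lam.
  + by rewrite setSD.
  + by rewrite (setSD _ H) orbT.
  + by rewrite (disjointW (subsetDl S [set a]) (subsetDl S' [set a]) H) !orbT.
Qed.


Lemma kernel_exists (F : fieldType) (T I : finType) (E : {set T}) (Rw : {set I})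
  (r : I -> T -> F) : (#|Rw| < #|E|)%N ->
  exists d : T -> F, [/\ exists e, d e != 0, forall e, e \notin E -> d e = 0
     & forall i, i \in Rw -> \sum_e r i e * d e = 0].
Proof.
move=> hc.
pose A : 'M[F]_(#|E|, #|Rw|) := \matrix_(j, i) r (enum_val i) (enum_val j).
set K := kermx A.
have hK : K != 0.
  rewrite -mxrank_eq0 mxrank_ker -lt0n subn_gt0.
  exact: leq_ltn_trans (rank_leq_col A) hc.
have [j0 [k0 Hjk]] : exists j k, K j k != 0.
  case: (boolP [exists j, exists k, K j k != 0]) => [/existsP[j /existsP[k H]]|/existsPn H].
    by exists j, k.
  case/eqP: hK; apply/matrixP => j k; move: (H j) => /existsPn/(_ k).
  by rewrite negbK => /eqP ->; rewrite mxE.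
pose w := row j0 K.
have hw : w *m A = 0 by rewrite /w -row_mul mulmx_ker row0.
exists (fun e => \sum_(j | enum_val j == e) w 0 j); split.
- exists (enum_val k0).
  rewrite (eq_bigl (pred1 k0)); last by move=> j; rewrite /= (inj_eq enum_val_inj).
  by rewrite big_pred1_eq /w mxE.
- move=> e eE; rewrite big_pred0 // => j.
  by apply/negbTE; apply: contraNneq eE => <-; exact: enum_valP.
- move=> i iR.
  have := congr1 (fun M : 'M_(1, #|Rw|) => M 0 (enum_rank_in iR i)) hw.
  rewrite /= !mxE => H; apply: (etrans _ H).
  rewrite (eq_bigr (fun e => \sum_(j | enum_val j == e) r i e * w 0 j)); last first.
    by move=> e _; rewrite mulr_sumr.
  rewrite (exchange_big_dep predT) //=; apply: eq_bigr => j _.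
  rewrite (eq_bigl (pred1 (enum_val j))); last by move=> e; rewrite /= eq_sym.
  by rewrite big_pred1_eq !mxE enum_rankK_in // mulrC.
Qed.

Lemma slack (R : realType) (I : finType) (P : pred I) (s : I -> R) :
  (forall i, P i -> 0 < s i) -> exists2 eps : R, 0 < eps & forall i, P i -> eps <= s i.
Proof.
move=> hs; exists (\big[Order.min/1]_(i | P i) s i).
  by apply: lt_bigmin => //; exact: ltr01.
by move=> i Pi; apply: bigmin_le_cond.
Qed.


Lemma cut_ge2 (R : realType) n (x : edge n -> R) : in_SEP x ->
  forall S : {set 'I_n}, (0 < #|S|)%N -> (#|S| < n)%N -> 2 <= cutf x S.
Proof.
case=> deg cutc bnd.
have base : forall S : {set 'I_n}, [|| #|S| == 1%N, #|S| == 2%N | (3 <= #|S| <= n - 3)%N] ->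
    2 <= cutf x S.
  move=> S /or3P [/cards1P [v ->]|/cards2P [a [b [ab ->]]]|/andP[h1 h2]].
  - by rewrite /cutf deg.
  - have [e0 [_ He]] := pair_cut R ab.
    have := He x; rewrite /cutf !deg.
    by have := bnd e0; case/andP => _ h; lra.
  - exact: cutc.
move=> S c0 cn.
have hC := cardsC S; rewrite card_ord in hC.
case: (leqP #|S| (n - 3)) => h.
  by apply: base; case: (#|S|) c0 h => [|[|[|k]]] //.
rewrite -cutfC; apply: base.
have : (#|~: S| <= 2)%N by lia.
have : (0 < #|~: S|)%N by lia.
by case: (#|~: S|) => [|[|[|k]]].
Qed.

Lemma deg_ge2 (R : realType) n (x : edge n -> R) : in_SEP x ->
  forall v, (2 <= supp_deg x v)%N.
Proof.
case=> deg _ bnd v.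
have h : \sum_(e : edge n | v \in val e) x e = 2.
  by rewrite -(deg v); apply: eq_bigl => e; rewrite in_cut1.
rewrite (bigID (fun e => 0 < x e)) /= in h.
rewrite [X in _ + X = _]big1 ?addr0 in h; last first.
  move=> e /andP[_ H]; have := bnd e; case/andP => H0 _.
  by apply/eqP; rewrite eq_le H0 andbT leNgt.
have : 2 <= (supp_deg x v)%:R :> R.
  rewrite -h /supp_deg -sum1_card natr_sum.
  rewrite [X in _ <= X](eq_bigl (fun e : edge n => (v \in val e) && (0 < x e))); last first.
    by move=> e; rewrite !inE andbC.
  apply: ler_sum => e _; have := bnd e; case/andP => _ ->.
  by [].
by rewrite (ler_nat R 2).
Qed.

Lemma deg_le_gen n (v : 'I_n) (A : {set edge n}) :
  (forall e, e \in A -> v \in val e) -> (#|A| <= #|[set~ v]|)%N.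
Proof.
move=> hA.
have inj : {in A &, injective (fun e : edge n => val e :\ v)}.
  move=> e1 e2 h1 h2 /= E.
  by apply/val_inj; rewrite -(setD1K (hA _ h1)) -(setD1K (hA _ h2)) E.
rewrite -(card_in_imset inj).
apply: leq_trans (leq_imset_card (fun w => [set w]) [set~ v]).
apply: subset_leq_card; apply/subsetP => X /imsetP [e eA ->].
have ve := hA e eA.
have : #|val e :\ v| == 1%N.
  by have := cardsD1 v (val e); rewrite ve (eqP (valP e)); case; rewrite add0n => <-.
case/cards1P => w Hw; rewrite Hw; apply: imset_f.
have : w \in val e :\ v by rewrite Hw set11.
by rewrite !inE => /andP[].
Qed.

Lemma deg_le (R : realType) n (x : edge n -> R) v : (supp_deg x v <= n.-1)%N.
Proof.
rewrite /supp_deg (_ : n.-1 = #|[set~ v]|); last by rewrite cardsC1 card_ord.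
by apply: deg_le_gen => e; rewrite inE => /andP[].
Qed.

Lemma handshake (R : realType) n (x : edge n -> R) :
  (\sum_(v < n) supp_deg x v = 2 * #|Defs.support x|)%N.
Proof.
rewrite /supp_deg.
rewrite (eq_bigr (fun v => \sum_(e in Defs.support x) (v \in val e : nat))); last first.
  move=> v _; rewrite -sum1_card big_mkcond [RHS]big_mkcond /=.
  by apply: eq_bigr => e _; rewrite inE; case: (e \in Defs.support x); case: (v \in sval e).
rewrite exchange_big /= mulnC -sum_nat_const; apply: eq_bigr => e _.
by rewrite -[RHS](eqP (valP e)) -sum1_card [RHS]big_mkcond /=; apply: eq_bigr => v _; case: (v \in sval e).
Qed.


Lemma arith4 (R : realFieldType) (a b c : R) : 2 + 2 = a + b + 2 * c ->
  2 <= a -> 2 <= b -> 0 <= c -> [/\ a = 2, b = 2 & c = 0].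
Proof. by move=> *; split; lra. Qed.

Lemma ar_c1 a b n : (a + b = n)%N -> (a < n)%N -> (0 < b)%N.
Proof. lia. Qed.
Lemma ar_c2 a b n : (a + b = n)%N -> (0 < a)%N -> (b < n)%N.
Proof. lia. Qed.

Lemma ar_c3 a n : (a <= n - 3)%N -> (3 < n)%N -> (a < n)%N.
Proof. lia. Qed.
Lemma ar_x1 (R : realFieldType) (a : R) : 2 + 2 = a + 2 * 1 -> a = 2.
Proof. lra. Qed.
Lemma ar_d (R : realFieldType) (a : R) : 0 + 0 = 0 + 2 * a -> a = 0.
Proof. lra. Qed.
Lemma ar_p (R : realFieldType) (a b mu : R) : mu <= a - 2 -> - mu <= b -> 2 <= a + b.
Proof. lra. Qed.
Lemma ar_b (R : realFieldType) (a b mu : R) : mu <= a -> mu <= 1 - a -> - mu <= b <= mu ->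
  0 <= a + b <= 1.
Proof. by move=> h1 h2 /andP[h3 h4]; apply/andP; split; lra. Qed.
Lemma half01 (R : realFieldType) : 0 < 1 / 2 :> R /\ 1 / 2 < 1 :> R.
Proof. split; lra. Qed.
Lemma ar_mid (R : realFieldType) (a b e : R) :
  a = 1 / 2 * (a + e * b) + (1 - 1 / 2) * (a + (- e) * b).
Proof. rewrite mulNr; lra. Qed.
Lemma ar_eq (R : realFieldType) (a b e : R) : 0 < e -> a + e * b = a + (- e) * b -> b = 0.
Proof.
move=> e0; rewrite mulNr => h.
have /eqP : e * b = 0 by lra.
by rewrite mulf_eq0 (gt_eqF e0) /= => /eqP.
Qed.
Lemma ar_hb (R : realFieldType) (t a eps M mu : R) : `|t| <= eps -> `|a| <= M -> eps * M = mu ->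
  - mu <= t * a <= mu.
Proof.
move=> h1 h2 h3; rewrite -ler_norml normrM -h3.
by apply: ler_pM => //; apply: normr_ge0.
Qed.

Lemma support_bound (R : realType) n (x : edge n -> R) (r : 'I_n) :
  (3 < n)%N -> SEP_vertex x -> (#|Defs.support x| <= 2 * n - 3)%N.
Proof.
move=> n4 [hx vtx]; have [deg cutc bnd] := hx.
pose F := [set S : {set 'I_n} | [&& r \notin S, (1 < #|S|)%N, (#|S| < n.-1)%N & cutf x S == 2]].
pose lamb (L : {set {set 'I_n}}) := [forall A in L, forall B in L, lam A B].
have lambP : forall L, lamb L -> {in L &, forall A B, lam A B}.
  move=> L /forallP H A B AL BL.
  by move: (H A) => /implyP/(_ AL)/forallP/(_ B)/implyP/(_ BL).
have P0 : (set0 \subset F) && lamb set0.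
  by rewrite sub0set; apply/forallP => A; rewrite inE.
case: (@arg_maxnP _ set0 (fun L0 : {set {set 'I_n}} => (L0 \subset F) && lamb L0) (fun L0 => #|L0|) P0) => L /andP[LF lamL] Lmax.
have {}lamL := lambP L lamL.
have inF : forall S, S \in F -> [/\ r \notin S, (1 < #|S|)%N, (#|S| < n.-1)%N & cutf x S = 2].
  by move=> S; rewrite inE => /and4P[a b c /eqP d].
have subr : forall S : {set 'I_n}, r \notin S -> S \subset [set~ r].
  move=> S rS; apply/subsetP => w wS; rewrite !inE; apply: contraNneq rS => <-; exact: wS.
have cr : #|[set~ r]| = n.-1 by rewrite cardsC1 card_ord.
have cL : (#|L| <= n - 3)%N.
  have rL : [set~ r] \notin L.
    apply/negP => /(subsetP LF) /inF [_ _ h _]; move: h; rewrite cr ltnn //.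
  have := @lam_count _ n.-1 [set~ r] ([set~ r] |: L) cr.
  rewrite cardsU1 rL /=.
  have ar : forall k m, (1 + k <= m.-1.-1)%N -> (k <= m - 3)%N by move=> k m; lia.
  move=> H; apply: ar; apply: H.
  - move=> S; rewrite !inE => /predU1P [->|SL]; first by rewrite subxx cr; split=> //; lia.
    have [rS S2 _ _] := inF S (subsetP LF S SL).
    by split=> //; apply: subr.
  - move=> A B; rewrite !inE => /predU1P [->|AL] /predU1P [->|BL].
    + by rewrite /lam subxx.
    + have [rS _ _ _] := inF B (subsetP LF B BL).
      by rewrite /lam subr ?orbT.
    + have [rS _ _ _] := inF A (subsetP LF A AL).
      by rewrite /lam subr.
    + exact: lamL.
rewrite leqNgt; apply/negP => hE.
pose Rw := [set [set v] | v in 'I_n] :|: L.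
have cRw : (#|Rw| < #|Defs.support x|)%N.
  have h1 := leq_imset_card (fun v : 'I_n => [set v]) 'I_n.
  rewrite card_ord in h1.
  apply: leq_ltn_trans (leq_card_setU _ _) _.
  apply: leq_ltn_trans (leq_add h1 cL) _.
  have ar : forall k, (2 * n - 3 < k)%N -> (n + (n - 3) < k)%N by move=> k; lia.
  exact: ar.
have [d [[e0 de0] dsupp dker]] :=
  kernel_exists (fun (S : {set 'I_n}) (e : edge n) => if in_cut S e then 1 else 0 : R) cRw.
pose D := cutf d.
have DRw : forall S, S \in Rw -> D S = 0.
  move=> S SR; rewrite /D /cutf big_mkcond; apply: etrans _ (dker S SR); apply: eq_bigr => e _.
  by case: (in_cut S e); rewrite ?mul1r ?mul0r.
have D1 : forall v, D [set v] = 0.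
  by move=> v; apply: DRw; rewrite inE; apply/orP; left; apply: imset_f.
have DL : forall S, S \in L -> D S = 0.
  by move=> S SL; apply: DRw; rewrite inE SL orbT.
have dE : forall e, ~~ (0 < x e) -> d e = 0.
  by move=> e h; apply: dsupp; rewrite inE.
have Dsmall : forall A : {set 'I_n}, r \notin A -> (0 < #|A|)%N -> (#|A| < n)%N ->
    ((1 < #|A|)%N -> (#|A| < n.-1)%N -> D A = 0) -> D A = 0.
  move=> A rA c0 cn H.
  case: (eqVneq #|A| 1%N) => [/eqP/cards1P [v ->]|c1]; first exact: D1.
  case: (eqVneq #|A| n.-1) => [cn1|cn1]; last by apply: H; lia.
  have -> : A = [set~ r].
    by apply/eqP; rewrite eqEcard (subr A rA) cr cn1 leqnn.
  by rewrite /D cutfC; apply: D1.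
have inL : forall S, S \in F -> (forall W, W \in L -> lam W S) -> S \in L.
  move=> S SF HW; apply/negPn/negP => SL.
  have := Lmax (S |: L); rewrite cardsU1 SL /=.
  suff -> : ((S |: L) \subset F) && lamb (S |: L) by move=> /(_ isT); rewrite add1n ltnn.
  apply/andP; split; first by rewrite subUset sub1set SF LF.
  apply/forallP => A; apply/implyP => AL'; apply/forallP => B; apply/implyP => BL'.
  move: AL' BL'; rewrite !inE => /predU1P [->|AL] /predU1P [->|BL].
  - by rewrite /lam subxx.
  - by rewrite lamC; apply: HW.
  - exact: HW.
  - exact: lamL.
have nonlam : forall S T : {set 'I_n}, ~~ lam T S -> S :&: T != set0.
  move=> S T; apply: contraNneq => h; rewrite /lam.
  by rewrite disjoint_sym -setI_eq0 h eqxx !orbT.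
have step : forall S T, S \in F -> T \in L -> ~~ lam T S ->
    (forall A, A \in F -> (#|[set W in L | ~~ lam W A]| < #|[set W in L | ~~ lam W S]|)%N -> D A = 0) ->
    D S = 0.
  move=> S T SF TL nTS IH.
  have [rS S2 Sn cS] := inF S SF.
  have [rT T2 Tn cT] := inF T (subsetP LF T TL).
  have hmod := modular x S T.
  have B0 : 0 <= \sum_(e | betw S T e) x e.
    by apply: sumr_ge0 => e _; have := bnd e; case/andP.
  have rI : r \notin S :&: T by rewrite inE (negbTE rS).
  have rU : r \notin S :|: T by rewrite inE (negbTE rS) (negbTE rT).
  have cI0 : (0 < #|S :&: T|)%N by rewrite card_gt0 nonlam.
  have cIS : (#|S :&: T| <= #|S|)%N by apply: subset_leq_card; apply: subsetIl.
  have cUS : (#|S| <= #|S :|: T|)%N by apply: subset_leq_card; apply: subsetUl.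
  have cUn : (#|S :|: T| <= n.-1)%N by rewrite -cr; apply: subset_leq_card; apply: subr.
  have n0 : (0 < n)%N := leq_ltn_trans (leq0n 3) n4.
  have cIn : (#|S :&: T| < n)%N := leq_ltn_trans cIS (leq_trans Sn (leq_pred n)).
  have cU0 : (0 < #|S :|: T|)%N := leq_trans (ltnW S2) cUS.
  have cUn' : (#|S :|: T| < n)%N by apply: leq_ltn_trans cUn _; rewrite ltn_predL.
  have cI2 := cut_ge2 hx cI0 cIn.
  have cU2 := cut_ge2 hx cU0 cUn'.
  rewrite cS cT in hmod.
  have [cIe cUe Bx] := arith4 hmod cI2 cU2 B0.
  have Bd : \sum_(e | betw S T e) d e = 0.
    apply: big1 => e be; apply: dE.
    have := psumr_eq0P (fun i _ => (andP (bnd i)).1) Bx be => ->.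
    by rewrite ltxx.
  have dmod := modular d S T.
  rewrite Bd mulr0 addr0 -/(D S) -/(D T) -/(D (S :&: T)) -/(D (S :|: T)) in dmod.
  rewrite (DL T TL) addr0 in dmod.
  have sub1 : forall A, (forall W, lam W T -> lam W S -> lam W A) -> lam T A ->
      (#|[set W in L | ~~ lam W A]| < #|[set W in L | ~~ lam W S]|)%N.
    move=> A HA hTA; apply: proper_card; apply/properP; split.
      apply/subsetP => W; rewrite !inE => /andP[WL nWA]; rewrite WL /=.
      apply: contra nWA => WS; apply: HA WS; exact: lamL.
    by exists T; rewrite !inE TL //= hTA.
  have DI : D (S :&: T) = 0.
    apply: (Dsmall _ rI cI0 cIn) => h1 h2; apply: IH.
      by rewrite inE rI h1 h2 cIe eqxx.
    apply: sub1; first by move=> W WT WS; apply: lam_inter.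
    by rewrite /lam subsetIr orbT.
  have DU : D (S :|: T) = 0.
    apply: (Dsmall _ rU cU0 cUn') => h1 h2; apply: IH.
      by rewrite inE rU h1 h2 cUe eqxx.
    apply: sub1; first by move=> W WT WS; apply: lam_union.
    by rewrite /lam subsetUr.
  by rewrite DI DU addr0 in dmod.
have tightF : forall S, S \in F -> D S = 0.
  move=> S SF.
  move: {2}#|[set W in L | ~~ lam W S]| (leqnn #|[set W in L | ~~ lam W S]|) => k.
  elim: k S SF => [|k IHk] S SF hk.
    case: (set_0Vmem [set W in L | ~~ lam W S]) => [H0|[T]].
      apply: DL; apply: inL => // W WL; apply/negPn/negP => nWS.
      have : W \in [set W in L | ~~ lam W S] by rewrite inE WL nWS.
      by rewrite H0 inE.
    move=> TW; move: hk; rewrite leqn0 => /eqP /cards0_eq H0.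
    by rewrite H0 inE in TW.
  case: (set_0Vmem [set W in L | ~~ lam W S]) => [H0|[T]].
    apply: DL; apply: inL => // W WL; apply/negPn/negP => nWS.
    have : W \in [set W in L | ~~ lam W S] by rewrite inE WL nWS.
    by rewrite H0 inE.
  rewrite inE => /andP[TL nTS].
  apply: (step S T SF TL nTS) => A AF hA; apply: IHk => //.
  by rewrite -ltnS; apply: leq_trans hA hk.
have tight : forall S : {set 'I_n}, (0 < #|S|)%N -> (#|S| < n)%N -> cutf x S = 2 -> D S = 0.
  have gen : forall S : {set 'I_n}, r \notin S -> (0 < #|S|)%N -> (#|S| < n)%N -> cutf x S = 2 -> D S = 0.
    move=> S rS c0 cn cS; apply: Dsmall => // h1 h2.
    by apply: tightF; rewrite inE rS h1 h2 cS eqxx.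
  move=> S c0 cn cS; case: (boolP (r \in S)) => rS; last exact: gen.
  have hC := cardsC S; rewrite card_ord in hC.
  rewrite /D -cutfC; apply: gen.
  - by rewrite inE rS.
  - exact: ar_c1 hC cn.
  - exact: ar_c2 hC c0.
  - by rewrite cutfC.
have dx1 : forall e, x e = 1 -> d e = 0.
  move=> e xe1.
  have [u [v [uv ev]]] := edgeP e.
  have [e1 [ev1 He]] := pair_cut R uv.
  have e1e : e1 = e by apply/val_inj; rewrite ev1 ev.
  have hxx := He x.
  have du : cutf x [set u] = 2 := deg u.
  have dv : cutf x [set v] = 2 := deg v.
  rewrite du dv e1e xe1 in hxx.
  have cuv := ar_x1 hxx.
  have c2 : #|[set u; v]| = 2%N by rewrite cards2 uv.
  have Duv := tight [set u; v] ltac:(by rewrite c2) ltac:(by rewrite c2 (ltn_trans _ n4)) cuv.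
  have hdd := He d.
  rewrite -/(D [set u]) -/(D [set v]) -/(D [set u; v]) !D1 Duv e1e in hdd.
  exact: ar_d hdd.
pose M := \sum_e `|d e|.
have hdM : forall e, `|d e| <= M.
  by move=> e; rewrite /M (bigD1 e) //= lerDl; apply: sumr_ge0 => i _; apply: normr_ge0.
have M0 : 0 < M by apply: lt_le_trans (hdM e0); rewrite normr_gt0.
have hDM : forall S, `|D S| <= M.
  move=> S; apply: le_trans (ler_norm_sum _ _ _) _.
  rewrite /M [X in _ <= X](bigID (in_cut S)) /= lerDl.
  by apply: sumr_ge0 => i _; apply: normr_ge0.
pose P (i : (edge n + edge n + {set 'I_n})%type) := match i with
  | inl (inl e) => 0 < x e | inl (inr e) => x e < 1 | inr X => 2 < cutf x X end.
pose sl (i : (edge n + edge n + {set 'I_n})%type) := match i with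
  | inl (inl e) => x e | inl (inr e) => 1 - x e | inr X => cutf x X - 2 end.
have [mu mu0 hmu] : exists2 mu : R, 0 < mu & forall i, P i -> mu <= sl i.
  apply: slack => -[[e|e]|X] /=; first by [].
    by rewrite subr_gt0.
  by rewrite subr_gt0.
pose eps := mu / M.
have eps0 : 0 < eps by rewrite divr_gt0.
have epsM : eps * M = mu by rewrite /eps divfK // gt_eqF.
have pert : forall t, `|t| <= eps -> in_SEP (fun e => x e + t * d e).
  move=> t ht; split.
  - move=> v; rewrite big_split /= -mulr_sumr deg.
    by have := D1 v; rewrite /D /cutf => ->; rewrite mulr0 addr0.
  - move=> S c3 cn3; rewrite big_split /= -mulr_sumr -/(cutf x S) -/(cutf d S) -/(D S).
    have cS2 := cutc S c3 cn3; rewrite -/(cutf x S) in cS2.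
    case: (eqVneq (cutf x S) 2) => cS.
      rewrite (tight S (ltnW (ltnW c3)) (ar_c3 cn3 n4) cS) mulr0 addr0.
      exact: cS2.
    have lt2 : 2 < cutf x S by rewrite lt_neqAle eq_sym cS cS2.
    have := hmu (inr S) lt2; rewrite /= => hm.
    have /andP[hb1 _] := ar_hb ht (hDM S) epsM.
    exact: ar_p hm hb1.
  - move=> e; case: (eqVneq (d e) 0) => de.
      by rewrite de mulr0 addr0; exact: bnd e.
    have xp : 0 < x e by apply/negPn/negP => h; rewrite (dE e h) eqxx in de.
    have xl : x e < 1.
      have := bnd e; case/andP => _ h; rewrite lt_neqAle h andbT.
      by apply/negP => /eqP h1; rewrite (dx1 e h1) eqxx in de.
    have h1 := hmu (inl (inl e)) xp; have h2 := hmu (inl (inr e)) xl.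
    exact: ar_b h1 h2 (ar_hb ht (hdM e) epsM).
have [h0 h1] := half01 R.
have hy := pert eps ltac:(by rewrite ger0_norm // ltW).
have hz := pert (- eps) ltac:(by rewrite normrN ger0_norm // ltW).
have := vtx _ _ _ hy hz h0 h1 (fun e => ar_mid (x e) (d e) eps).
move=> /(congr1 (fun f => f e0)) /= /(ar_eq eps0) h.
by rewrite h eqxx in de0.
Qed.


Unset Implicit Arguments. Set Strict Implicit. Set Printing Implicit Defensive.

Lemma final_arith (k : int) (n E : nat) : (3 < n)%N -> (E <= 2 * n - 3)%N ->
  (n * 3 <= 2 * E)%N -> E%:Z = n%:Z + k -> (k + 3 <= n%:Z) /\ (n%:Z <= 2 * k).
Proof. move=> *; split; lia. Qed.

Lemma n4_arith a n : (3 <= a)%N -> (a <= n.-1)%N -> (3 < n)%N.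
Proof. lia. Qed.

Theorem mainTheorem3 (R : realType) (k : int) (n : nat) (x : edge n -> R) :
  in_A k x -> (k + 3 <= n%:Z) /\ (n%:Z <= 2 * k).
Proof.
move=> [[vt frac hk] hd2].
have hx := vt.1.
have d3 : forall v, (3 <= supp_deg x v)%N.
  move=> v; have := deg_ge2 hx v.
  by rewrite leq_eqVlt eq_sym (negbTE (hd2 v)).
case: (pickP (@predT (edge n))) => [e _ | H]; last first.
  by exfalso; apply: frac => e; have := H e.
have [u [v [uv ev]]] := edgeP e.
have n4 : (3 < n)%N := @n4_arith _ n (d3 u) (deg_le x u).
have sb := support_bound u n4 vt.
have hs := handshake x.
have h3 : (\sum_(v < n) 3 <= \sum_(v < n) supp_deg x v)%N.
  by apply: leq_sum => w _; apply: d3.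
rewrite hs sum_nat_const card_ord in h3.
exact: (@final_arith k n _ n4 sb h3 hk).
Qed.
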